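(* Let $R$ be a commutative ring, $\Gamma$ an EI-category with endofunctor $\phi$, and let $f\colon C\to C\circ\phi$ and $g\colon D\to D\circ\phi$ be $\phi$-endomorphisms of finite free $R\Gamma$-chain complexes. If $h\colon C\to D$ is a chain homotopy equivalence with $g h=(h\circ\phi) f$, then $u(f)=u(g)$ in $U(R,\Gamma,\phi)$.
   Context: EI-category: small category in which every endomorphism is an isomorphism. $R\Gamma$-modules are contravariant functors $\Gamma\to R$-modules; finitely generated free ones are isomorphic to finite sums of $R\Gamma(?,x)=R[\mathrm{Mor}_\Gamma(?,x)]$. $U(R,\Gamma,\phi)$ is $K_0$ of the exact category whose objects are natural transformations $g\colon M\to M\circ\phi$ with $M$ finitely generated free and whose morphisms $g\to g'$ are $\tau\colon M\to M'$ with $g'\tau=(\tau\circ\phi)g$. For a chain map $f\colon C\to C\circ\phi$ of finite free chain complexes, $u(f)=\sum_n(-1)^n[f_n]$. *)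

(* Defs.v *)
From HB Require Import structures.
From mathcomp Require Import all_boot all_algebra.
From Stdlib Require List.
From Stdlib Require Import Permutation.

Set Implicit Arguments.
Unset Strict Implicit.
Unset Printing Implicit Defensive.
Import GRing.Theory.
Local Open Scope ring_scope.

Record EICategory := {
  Ob : Type;
  Hom : Ob -> Ob -> Type;
  idm : forall x, Hom x x;
  cmp : forall x y z, Hom y z -> Hom x y -> Hom x z;
  cmp_idl : forall x y (a : Hom x y), cmp (idm y) a = a;
  cmp_idr : forall x y (a : Hom x y), cmp a (idm x) = a;
  cmp_assoc : forall w x y z (a : Hom y z) (b : Hom x y) (c : Hom w x),
      cmp a (cmp b c) = cmp (cmp a b) c;
  ei_axiom : forall x (e : Hom x x), exists e' : Hom x x,
      cmp e e' = idm x /\ cmp e' e = idm x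
}.

Record Endofunctor (G : EICategory) := {
  fob : Ob G -> Ob G;
  fmor : forall x y, @Hom G x y -> @Hom G (fob x) (fob y);
  fmor_id : forall x, fmor (idm x) = idm (fob x);
  fmor_cmp : forall x y z (a : @Hom G y z) (b : @Hom G x y),
      fmor (cmp a b) = cmp (fmor a) (fmor b)
}.

Section Modules.
Variables (R : comPzRingType) (G : EICategory).

Definition lin (U V : lmodType R) (f : U -> V) : Prop :=
  forall (a : R) (u v : U), f (a *: u + v) = a *: f u + f v.

(* RG-modules: contravariant functors G -> R-modules *)
Record RGmod := {
  mob : Ob G -> lmodType R;
  mact : forall x y, @Hom G y x -> mob x -> mob y;
  mact_lin : forall x y (a : @Hom G y x), lin (mact a);
  mact_id : forall x (m : mob x), mact (idm x) m = m;
  mact_cmp : forall x y z (a : @Hom G y x) (b : @Hom G z y) (m : mob x),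
      mact (cmp a b) m = mact b (mact a m)
}.
Arguments mact r {x y}.

Definition natural (M N : RGmod) (t : forall x, mob M x -> mob N x) : Prop :=
  (forall x, lin (t x)) /\
  forall x y (a : @Hom G y x) (m : mob M x), t y (mact M a m) = mact N a (t x m).

(* M is finitely generated free, i.e. isomorphic to a finite sum
   \oplus_{i<k} R G(?, x_i) = \oplus_{i<k} R[Mor(?, x_i)]: there are b_i in M(x_i)
   such that for every y the elements M(a)(b_i), (i, a : y -> x_i), form an
   R-basis of M(y).  (This is what the isomorphism unfolds to via Yoneda.) *)
Definition is_basis (V : lmodType R) (I : Type) (v : I -> V) : Prop :=
  (forall m : V, exists (s : seq I) (c : I -> R), m = \sum_(j <- s) c j *: v j) /\
  (forall (s : seq I) (c : I -> R), List.NoDup s ->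
      \sum_(j <- s) c j *: v j = 0 -> forall j, List.In j s -> c j = 0).

Definition fg_free (M : RGmod) : Prop :=
  exists (k : nat) (xs : 'I_k -> Ob G) (b : forall i, mob M (xs i)),
    forall y, is_basis (fun p : {i : 'I_k & @Hom G y (xs i)} =>
                          mact M (projT2 p) (b (projT1 p))).

Variable phi : Endofunctor G.

Definition phi_natural (M : RGmod) (g : forall x, mob M x -> mob M (fob phi x)) : Prop :=
  (forall x, lin (g x)) /\
  forall x y (a : @Hom G y x) (m : mob M x), g y (mact M a m) = mact M (fmor phi a) (g x m).

(* objects of the exact category defining U(R, G, phi) *)
Record PhiEnd := {
  pe_mod : RGmod;
  pe_free : fg_free pe_mod;
  pe_map : forall x, mob pe_mod x -> mob pe_mod (fob phi x);
  pe_nat : phi_natural pe_map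
}.

Definition pe_hom (E E' : PhiEnd)
    (tau : forall x, mob (pe_mod E) x -> mob (pe_mod E') x) : Prop :=
  natural tau /\
  forall x (m : mob (pe_mod E) x), pe_map (tau x m) = tau (fob phi x) (pe_map m).

Definition pe_iso (E E' : PhiEnd) : Prop :=
  exists (tau : forall x, mob (pe_mod E) x -> mob (pe_mod E') x)
         (sig : forall x, mob (pe_mod E') x -> mob (pe_mod E) x),
    pe_hom tau /\ pe_hom sig /\
    (forall x m, sig x (tau x m) = m) /\ (forall x m, tau x (sig x m) = m).

Definition pe_ses (A B C : PhiEnd)
    (tau : forall x, mob (pe_mod A) x -> mob (pe_mod B) x)
    (sig : forall x, mob (pe_mod B) x -> mob (pe_mod C) x) : Prop :=
  pe_hom tau /\ pe_hom sig /\
  forall x, injective (tau x) /\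
            (forall c, exists b, sig x b = c) /\
            (forall b, sig x b = 0 <-> exists a, tau x a = b).

(* K_0 of this exact category: formal Z-combinations of objects (a list of
   signed objects; true = +, false = -) modulo the congruence generated by the
   abelian group laws, isomorphism invariance and [B] = [A] + [C] for short
   exact sequences.  K0eq l l' means l and l' define the same element of
   U(R, G, phi). *)
Inductive K0eq : seq (bool * PhiEnd) -> seq (bool * PhiEnd) -> Prop :=
| K0_refl l : K0eq l l
| K0_sym l l' : K0eq l l' -> K0eq l' l
| K0_trans l1 l2 l3 : K0eq l1 l2 -> K0eq l2 l3 -> K0eq l1 l3
| K0_perm l l' : Permutation l l' -> K0eq l l'
| K0_app l1 l2 l3 l4 : K0eq l1 l2 -> K0eq l3 l4 -> K0eq (l1 ++ l3) (l2 ++ l4)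
| K0_cancel E : K0eq [:: (true, E); (false, E)] [::]
| K0_iso E E' : pe_iso E E' -> K0eq [:: (true, E)] [:: (true, E')]
| K0_ses A B C tau sig : @pe_ses A B C tau sig ->
    K0eq [:: (true, B)] [:: (true, A); (true, C)].

End Modules.

Arguments mact {R G} r {x y}.

Section Complexes.
Variables (R : comPzRingType) (G : EICategory).

Local Unset Implicit Arguments.
Record Complex := {
  cmod : int -> RGmod R G;
  cfree : forall n, fg_free (cmod n);
  cd : forall n x, mob (cmod (n + 1)) x -> mob (cmod n) x;
  cd_nat : forall n, natural (cd n);
  cdd : forall n x (m : mob (cmod (n + 1 + 1)) x), cd n x (cd (n + 1) x m) = 0;
  cbound : nat;
  cbound_spec : forall n : int, (n < - (cbound%:Z) \/ cbound%:Z < n) ->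
      forall x (m : mob (cmod n) x), m = 0
}.
Local Set Implicit Arguments.

Definition cmap_type (C D : Complex) :=
  forall n x, mob (cmod C n) x -> mob (cmod D n) x.

Definition chain_map (C D : Complex) (h : cmap_type C D) : Prop :=
  (forall n, natural (h n)) /\
  forall n x (m : mob (cmod C (n + 1)) x), h n x (cd C n x m) = cd D n x (h (n + 1) x m).

Definition homotopy_type (C D : Complex) :=
  forall n x, mob (cmod C n) x -> mob (cmod D (n + 1)) x.

Definition chain_homotopic (C D : Complex) (k l : cmap_type C D) : Prop :=
  exists s : homotopy_type C D, (forall n, natural (s n)) /\
    forall n x (m : mob (cmod C (n + 1)) x),
      k (n + 1) x m - l (n + 1) x m = cd D (n + 1) x (s (n + 1) x m) + s n x (cd C n x m).

Definition chain_hequiv (C D : Complex) (h : cmap_type C D) : Prop :=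
  chain_map h /\ exists k : cmap_type D C, chain_map k /\
    chain_homotopic (fun n x m => k n x (h n x m)) (fun n x m => m) /\
    chain_homotopic (fun n x m => h n x (k n x m)) (fun n x m => m).

Variable phi : Endofunctor G.

Definition phi_cmap_type (C : Complex) :=
  forall n x, mob (cmod C n) x -> mob (cmod C n) (fob phi x).

Definition phi_chain_map (C : Complex) (f : phi_cmap_type C) : Prop :=
  (forall n, phi_natural (f n)) /\
  forall n x (m : mob (cmod C (n + 1)) x),
    f n x (cd C n x m) = cd C n (fob phi x) (f (n + 1) x m).

Definition pe_of (C : Complex) (f : phi_cmap_type C) (Hf : phi_chain_map f)
    (n : int) : @PhiEnd R G phi :=
  @Build_PhiEnd R G phi (cmod C n) (cfree C n) (f n) (proj1 Hf n).

(* u(f) = sum_n (-1)^n [f_n], the sum over n in [-cbound, cbound] *)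
Definition u_of (C : Complex) (f : phi_cmap_type C) (Hf : phi_chain_map f)
    : seq (bool * @PhiEnd R G phi) :=
  [seq (~~ odd (absz n), pe_of Hf n)
    | n <- [seq (i%:Z - (cbound C)%:Z)%R | i <- iota 0 (2 * cbound C).+1]].

End Complexes.

Arguments cmod {R G} c n.
Arguments cd {R G} c n x.
Arguments cbound {R G} c.
Arguments cfree {R G} c n.

(* Main.v *)
Require Import Defs.
From HB Require Import structures.
From mathcomp Require Import all_boot all_algebra zify.
Require Import Defs.
From Stdlib Require Import Permutation.
Import GRing.Theory.
Local Open Scope ring_scope.

Set Implicit Arguments.
Unset Strict Implicit.
Unset Printing Implicit Defensive.

Section Lin.
Variables (R : comPzRingType) (U V : lmodType R) (f : U -> V) (Hf : lin f).
Lemma lin0 : f 0 = 0.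
Proof.
have := Hf 1 0 0; rewrite !scale1r addr0 => H.
by have := congr1 (fun z => z - f 0) H; rewrite subrr addrK.
Qed.
Lemma linD u v : f (u + v) = f u + f v.
Proof. by have := Hf 1 u v; rewrite !scale1r. Qed.
Lemma linZ a u : f (a *: u) = a *: f u.
Proof. by have := Hf a u 0; rewrite !addr0 lin0 addr0. Qed.
Lemma linN u : f (- u) = - f u.
Proof.
apply/eqP; rewrite -subr_eq0 opprK -linD addrC subrr; apply/eqP; exact: lin0.
Qed.
Lemma linB u v : f (u - v) = f u - f v.
Proof. by rewrite linD linN. Qed.
End Lin.

Lemma lin_intro (R : comPzRingType) (U V : lmodType R) (f : U -> V) :
  (forall u v, f (u + v) = f u + f v) -> (forall a u, f (a *: u) = a *: f u) -> lin f.
Proof. by move=> HD HZ a u v; rewrite HD HZ. Qed.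

Section K0.
Variables (R : comPzRingType) (G : EICategory) (phi : Endofunctor G).
Notation K0 := (@K0eq R G phi).
Notation PE := (@PhiEnd R G phi).

Definition negl (l : seq (bool * PE)) := [seq (~~ p.1, p.2) | p <- l].

Lemma K0_appl l l1 l2 : K0 l1 l2 -> K0 (l ++ l1) (l ++ l2).
Proof. by move=> H; apply: K0_app => //; apply: K0_refl. Qed.
Lemma K0_appr l l1 l2 : K0 l1 l2 -> K0 (l1 ++ l) (l2 ++ l).
Proof. by move=> H; apply: K0_app => //; apply: K0_refl. Qed.

Lemma K0_pair b E : K0 [:: (b, E); (~~ b, E)] [::].
Proof.
case: b; first exact: K0_cancel.
apply: K0_trans (K0_cancel E); apply: K0_perm; apply: perm_swap.
Qed.

Lemma K0_cancel_all l : K0 (l ++ negl l) [::].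
Proof.
elim: l => [|[b E] l IH] /=; first exact: K0_refl.
apply: (@K0_trans _ _ _ _ ([:: (b, E); (~~ b, E)] ++ (l ++ negl l))).
  apply: K0_perm => /=; apply: perm_skip; apply: Permutation_sym; apply: Permutation_middle.
by have := K0_app (K0_pair b E) IH.
Qed.

Lemma negl_cat l1 l2 : negl (l1 ++ l2) = negl l1 ++ negl l2.
Proof. by rewrite /negl map_cat. Qed.
Lemma neglK l : negl (negl l) = l.
Proof. by elim: l => [|[b E] l IH] //=; rewrite negbK -/(negl l) -/(negl (negl l)) IH. Qed.

Lemma K0_nil_r l l' : K0 l [::] -> K0 (l' ++ l) l'.
Proof. by move=> H; rewrite -{2}(cats0 l'); apply: K0_appl. Qed.

Lemma K0_neg l l' : K0 l l' -> K0 (negl l) (negl l').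
Proof.
move=> H.
apply: (@K0_trans _ _ _ _ (negl l ++ (l' ++ negl l'))).
  apply: K0_sym; apply: K0_nil_r; exact: K0_cancel_all.
apply: (@K0_trans _ _ _ _ (negl l ++ (l ++ negl l'))).
  by apply: K0_appl; apply: K0_appr; apply: K0_sym.
apply: (@K0_trans _ _ _ _ ((l ++ negl l) ++ negl l')).
  apply: K0_perm; rewrite catA; apply: Permutation_app_tail; apply: Permutation_app_comm.
by have := K0_app (K0_cancel_all l) (K0_refl (negl l')).
Qed.

Lemma K0_nil_neg l : K0 l [::] -> K0 (negl l) [::].
Proof. by move/K0_neg. Qed.

Lemma K0_diff l l' : K0 (l ++ negl l') [::] -> K0 l l'.
Proof.
move=> H.
apply: (@K0_trans _ _ _ _ (l ++ (negl l' ++ l'))).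
  apply: K0_sym; apply: K0_nil_r.
  have := K0_cancel_all (negl l'); rewrite neglK; exact.
apply: (@K0_trans _ _ _ _ ((l ++ negl l') ++ l')); first by rewrite catA; apply: K0_refl.
by have := K0_app H (K0_refl l').
Qed.

Lemma K0_flatten (T : Type) (F F' : T -> seq (bool * PE)) s :
  (forall x, K0 (F x) (F' x)) -> K0 (flatten (map F s)) (flatten (map F' s)).
Proof.
move=> H; elim: s => [|x s IH] /=; first exact: K0_refl.
exact: K0_app.
Qed.

Lemma flatten_pair (T : Type) (A B : T -> bool * PE) s :
  Permutation (flatten [seq [:: A x; B x] | x <- s]) (map A s ++ map B s).
Proof.
elim: s => [|x s IH] //=.
apply: perm_skip. apply: Permutation_trans (Permutation_middle _ _ _).
exact: perm_skip.
Qed.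

Lemma K0_nil_cat l1 l2 : K0 l1 [::] -> K0 l2 [::] -> K0 (l1 ++ l2) [::].
Proof. by move=> H1 H2; have := K0_app H1 H2. Qed.

End K0.

Set Implicit Arguments.
Unset Strict Implicit.
Unset Printing Implicit Defensive.

Section Basis.
Variables (R : comPzRingType).

Lemma basis_ext (V : lmodType R) (I : Type) (v v' : I -> V) :
  (forall i, v i = v' i) -> is_basis v -> is_basis v'.
Proof.
move=> E [Hs Hi]; split.
  move=> m; have [s [c ->]] := Hs m; exists s, c.
  by apply: eq_bigr => i _; rewrite E.
move=> s c Hn Hz; apply: Hi => //.
by rewrite (eq_bigr (fun j => c j *: v' j)) // => i _; rewrite E.
Qed.

Lemma NoDup_map_inj (I J : Type) (f : I -> J) (s : seq I) :
  (forall a b, f a = f b -> a = b) -> List.NoDup s -> List.NoDup (map f s).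
Proof.
move=> Hf; elim: s => [|x s IH] /=; first by move=> _; constructor.
move=> H; inversion H; subst; constructor; last exact: IH.
move=> /List.in_map_iff [y [/Hf E Hy]]; subst; contradiction.
Qed.

Lemma basis_reindex (V : lmodType R) (I J : Type) (v : I -> V)
    (sg : J -> I) (tu : I -> J) :
  (forall i, sg (tu i) = i) -> (forall j, tu (sg j) = j) ->
  is_basis v -> is_basis (fun j => v (sg j)).
Proof.
move=> st ts [Hs Hi]; split.
  move=> m; have [s [c ->]] := Hs m; exists (map tu s), (fun j => c (sg j)).
  by rewrite big_map; apply: eq_bigr => i _; rewrite st.
move=> s c Hn Hz j Hj.
have := Hi (map sg s) (fun i => c (tu i)).
rewrite big_map.
have -> : \sum_(j <- s) c (tu (sg j)) *: v (sg j) = \sum_(j <- s) c j *: v (sg j).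
  by apply: eq_bigr => i _; rewrite ts.
move=> /(_ _ Hz (sg j)); rewrite ts; apply.
  by apply: NoDup_map_inj => // a b E; rewrite -(ts a) -(ts b) E.
exact: List.in_map.
Qed.

Lemma sum_pair (V W : lmodType R) (I : Type) (s : seq I) (F : I -> V) (H : I -> W) :
  \sum_(i <- s) ((F i, H i) : V * W) = (\sum_(i <- s) F i, \sum_(i <- s) H i).
Proof.
elim: s => [|x s IH]; first by rewrite !big_nil.
by rewrite !big_cons IH.
Qed.

Definition getl (I1 I2 : Type) (p : I1 + I2) : option I1 :=
  match p with inl i => Some i | inr _ => None end.
Definition getr (I1 I2 : Type) (p : I1 + I2) : option I2 :=
  match p with inl _ => None | inr i => Some i end.

Lemma sum_getl (V : lmodType R) (I1 I2 : Type) (s : seq (I1 + I2)) (F : I1 + I2 -> V) :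
  (forall i, F (inr i) = 0) -> \sum_(p <- s) F p = \sum_(i <- pmap (@getl I1 I2) s) F (inl i).
Proof.
move=> H; elim: s => [|[i|i] s IH] /=; first by rewrite !big_nil.
  by rewrite !big_cons IH.
by rewrite big_cons H add0r IH.
Qed.
Lemma sum_getr (V : lmodType R) (I1 I2 : Type) (s : seq (I1 + I2)) (F : I1 + I2 -> V) :
  (forall i, F (inl i) = 0) -> \sum_(p <- s) F p = \sum_(i <- pmap (@getr I1 I2) s) F (inr i).
Proof.
move=> H; elim: s => [|[i|i] s IH] /=; first by rewrite !big_nil.
  by rewrite big_cons H add0r IH.
by rewrite !big_cons IH.
Qed.

Lemma NoDup_pmap (I J : Type) (f : I -> option J) (s : seq I) :
  (forall a b c, f a = Some c -> f b = Some c -> a = b) ->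
  List.NoDup s -> List.NoDup (pmap f s).
Proof.
move=> Hf; elim: s => [|x s IH] /=; first by move=> _; constructor.
move=> H; inversion H; subst.
case E: (f x) => [c|] /=; last exact: IH.
constructor; last exact: IH.
move=> Hc; apply: H2.
elim: s Hc {H H3 IH} => [|y s IHs] //=.
case E': (f y) => [d|] /=.
  by move=> [Hdc|/IHs]; [left; rewrite Hdc in E'; apply: (Hf _ _ _ E' E)|right].
by move=> /IHs; right.
Qed.

Lemma In_pmap (I J : Type) (f : I -> option J) (s : seq I) x c :
  f x = Some c -> List.In x s -> List.In c (pmap f s).
Proof.
move=> E; elim: s => [|y s IH] //= [->|/IH H]; first by rewrite E; left.
by case: (f y) => //= d; right.
Qed.

Definition sumv (V W : lmodType R) (I1 I2 : Type) (v : I1 -> V) (w : I2 -> W)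
  (p : I1 + I2) : (V * W)%type :=
  match p with inl i => (v i, 0) | inr i => (0, w i) end.

Lemma basis_sum (V W : lmodType R) (I1 I2 : Type) (v : I1 -> V) (w : I2 -> W) :
  is_basis v -> is_basis w -> is_basis (sumv v w).
Proof.
move=> [Hs1 Hi1] [Hs2 Hi2]; split.
  move=> [m1 m2]; have [s1 [c1 ->]] := Hs1 m1; have [s2 [c2 ->]] := Hs2 m2.
  exists (map inl s1 ++ map inr s2), (fun p => match p with inl i => c1 i | inr i => c2 i end).
  rewrite big_cat !big_map /=.
  have -> : \sum_(j <- s1) c1 j *: ((v j, 0) : V * W) = (\sum_(j <- s1) c1 j *: v j, 0).
    rewrite (eq_bigr (fun j => ((c1 j *: v j, 0) : V * W))); last first.
      by move=> j _; apply: injective_projections => //=; apply: scaler0.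
    by rewrite sum_pair big1_eq.
  have -> : \sum_(j <- s2) c2 j *: ((0, w j) : V * W) = (0, \sum_(j <- s2) c2 j *: w j).
    rewrite (eq_bigr (fun j => ((0, c2 j *: w j) : V * W))); last first.
      by move=> j _; apply: injective_projections => //=; apply: scaler0.
    by rewrite sum_pair big1_eq.
  by apply: injective_projections => /=; rewrite ?addr0 ?add0r.
move=> s c Hn Hz.
have Hsp : \sum_(p <- s) c p *: sumv v w p = \sum_(p <- s) ((c p *: (sumv v w p).1, c p *: (sumv v w p).2) : V * W).
  by apply: eq_bigr => p _; case: (sumv v w p).
rewrite Hsp sum_pair in Hz.
have H1 := congr1 fst Hz; have H2 := congr1 snd Hz; simpl in H1, H2.
rewrite (@sum_getl _ I1 I2 s) in H1; last by move=> i /=; rewrite scaler0.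
rewrite (@sum_getr _ I1 I2 s) in H2; last by move=> i /=; rewrite scaler0.
move=> [i|i] Hin.
  apply: (Hi1 _ (fun i => c (inl i)) _ H1).
    by apply: NoDup_pmap => // -[a|a] [b|b] d //= [->] [->].
  exact: (In_pmap (f := @getl I1 I2)) Hin.
apply: (Hi2 _ (fun i => c (inr i)) _ H2).
  by apply: NoDup_pmap => // -[a|a] [b|b] d //= [->] [->].
exact: (In_pmap (f := @getr I1 I2)) Hin.
Qed.

End Basis.

Set Implicit Arguments.
Unset Strict Implicit.
Unset Printing Implicit Defensive.

Section Mods.
Variables (R : comPzRingType) (G : EICategory).

Lemma mact0 (M : RGmod R G) x y (a : @Hom G y x) : mact M a 0 = 0.
Proof. exact: (lin0 (@mact_lin R G M x y a)). Qed.
Lemma mactD (M : RGmod R G) x y (a : @Hom G y x) u v : mact M a (u + v) = mact M a u + mact M a v.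
Proof. exact: (linD (@mact_lin R G M x y a)). Qed.
Lemma mactN (M : RGmod R G) x y (a : @Hom G y x) u : mact M a (- u) = - mact M a u.
Proof. exact: (linN (@mact_lin R G M x y a)). Qed.
Lemma mactB (M : RGmod R G) x y (a : @Hom G y x) u v : mact M a (u - v) = mact M a u - mact M a v.
Proof. exact: (linB (@mact_lin R G M x y a)). Qed.
Lemma mactZ (M : RGmod R G) x y (a : @Hom G y x) c u : mact M a (c *: u) = c *: mact M a u.
Proof. exact: (linZ (@mact_lin R G M x y a)). Qed.

Definition smod_mact (M N : RGmod R G) x y (a : @Hom G y x)
  (p : (mob M x * mob N x)%type) : (mob M y * mob N y)%type :=
  (mact M a p.1, mact N a p.2).
Arguments smod_mact : clear implicits.
Arguments smod_mact M N {x y}.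

Lemma smod_lin (M N : RGmod R G) x y (a : @Hom G y x) : lin (smod_mact M N a).
Proof.
move=> c u v; apply: injective_projections => /=; apply: mact_lin.
Qed.
Lemma smod_id (M N : RGmod R G) x (m : (mob M x * mob N x)%type) : smod_mact M N (idm x) m = m.
Proof. by case: m => u v; rewrite /smod_mact /= !mact_id. Qed.
Lemma smod_cmp (M N : RGmod R G) x y z (a : @Hom G y x) (b : @Hom G z y) m :
  smod_mact M N (cmp a b) m = smod_mact M N b (smod_mact M N a m).
Proof. by rewrite /smod_mact /= !mact_cmp. Qed.

Definition smod (M N : RGmod R G) : RGmod R G :=
  @Build_RGmod R G (fun x => (mob M x * mob N x)%type) (@smod_mact M N)
    (@smod_lin M N) (@smod_id M N) (@smod_cmp M N).

Definition fgT (M : RGmod R G) : Prop :=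
  exists (I : finType) (xs : I -> Ob G) (b : forall i, mob M (xs i)),
    forall y, is_basis (fun p : {i : I & @Hom G y (xs i)} =>
                          mact M (projT2 p) (b (projT1 p))).

Lemma fg_free_fgT M : fg_free M -> fgT M.
Proof. by move=> [k [xs [b H]]]; exists ('I_k : finType), xs, b. Qed.

Lemma existT_cast (I : Type) (P : I -> Type) i i' (e : i = i') (a : P i) :
  existT P i' (eq_rect i P a i' e) = existT P i a.
Proof. by destruct e. Qed.

Lemma fgT_fg_free M : fgT M -> fg_free M.
Proof.
move=> [I [xs [b H]]].
exists #|I|, (fun j => xs (enum_val j)), (fun j => b (enum_val j)) => y.
set P := fun i => @Hom G y (xs i).
pose sg := fun q : {j : 'I_#|I| & P (enum_val j)} =>
  existT P (enum_val (projT1 q)) (projT2 q).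
pose tu := fun q : {i : I & P i} =>
  existT (fun j => P (enum_val j)) (enum_rank (projT1 q))
    (eq_rect (projT1 q) P (projT2 q) _ (esym (enum_rankK (projT1 q)))).
apply: basis_ext (basis_reindex (sg := sg) (tu := tu) _ _ (H y)).
- by case.
- by case=> i a; rewrite /sg /tu /= existT_cast.
- case=> j a; rewrite /sg /tu /=.
  move: (esym (enum_rankK (enum_val j))).
  have : enum_rank (enum_val j) = j by apply: enum_valK.
  move: (enum_rank (enum_val j)) => j' e; destruct e => h.
  by rewrite (eq_irrelevance h erefl).
Qed.

Definition sxs (I1 I2 : Type) (xs1 : I1 -> Ob G) (xs2 : I2 -> Ob G) (p : I1 + I2) :=
  match p with inl i => xs1 i | inr i => xs2 i end.

Lemma fgT_sum M N : fgT M -> fgT N -> fgT (smod M N).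
Proof.
move=> [I1 [xs1 [b1 H1]]] [I2 [xs2 [b2 H2]]].
exists (I1 + I2)%type, (sxs xs1 xs2).
exists (fun p => match p as p return mob (smod M N) (sxs xs1 xs2 p) with
                 | inl i => (b1 i, 0) | inr i => (0, b2 i) end) => y.
pose P1 := fun i => @Hom G y (xs1 i).
pose P2 := fun i => @Hom G y (xs2 i).
pose sg := fun q : {p : I1 + I2 & @Hom G y (sxs xs1 xs2 p)} =>
  match q with existT p a =>
    (match p as p return @Hom G y (sxs xs1 xs2 p) -> ({i : I1 & P1 i} + {i : I2 & P2 i})%type with
     | inl i => fun a => inl (existT P1 i a)
     | inr i => fun a => inr (existT P2 i a) end) a end.
pose tu := fun q : ({i : I1 & P1 i} + {i : I2 & P2 i})%type =>
  match q with
  | inl (existT i a) => existT (fun p => @Hom G y (sxs xs1 xs2 p)) (inl i) a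
  | inr (existT i a) => existT (fun p => @Hom G y (sxs xs1 xs2 p)) (inr i) a end.
apply: basis_ext (basis_reindex (sg := sg) (tu := tu) _ _ (basis_sum (H1 y) (H2 y))).
- by case=> [[i|i] a]; rewrite /sg /tu /=; apply: injective_projections => //=;
     rewrite mact0.
- by case=> [[i a]|[i a]].
- by case=> [[i|i] a].
Qed.

Variable phi : Endofunctor G.
Notation PE := (@PhiEnd R G phi).

Definition phi_nat2 (M N : RGmod R G) (t : forall x, mob M x -> mob N (fob phi x)) : Prop :=
  (forall x, lin (t x)) /\ forall x y (a : @Hom G y x) (m : mob M x), t y (mact M a m) = mact N (fmor phi a) (t x m).

Section SumPE.
Variables (A C : PE) (t : forall x, mob (pe_mod C) x -> mob (pe_mod A) (fob phi x)).
Hypothesis Ht : phi_nat2 t.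

Definition spe_map x (p : mob (smod (pe_mod A) (pe_mod C)) x) :
   mob (smod (pe_mod A) (pe_mod C)) (fob phi x) :=
  (pe_map p.1 + t p.2, pe_map p.2).

Lemma spe_nat : phi_natural spe_map.
Proof.
have [LA NA] := pe_nat A; have [LC NC] := pe_nat C; have [LT NT] := Ht.
split.
  move=> x c u v; apply: injective_projections; rewrite /spe_map /=.
    rewrite (linD (LA x)) (linZ (LA x)) (linD (LT x)) (linZ (LT x)).
    by rewrite scalerDr addrACA.
  by rewrite (linD (LC x)) (linZ (LC x)).
move=> x y a m; apply: injective_projections; rewrite /spe_map /=.
  by rewrite NA NT mactD.
by rewrite NC.
Qed.

Definition sumPE : PE :=
  @Build_PhiEnd R G phi (smod (pe_mod A) (pe_mod C))
    (fgT_fg_free (fgT_sum (fg_free_fgT (pe_free A)) (fg_free_fgT (pe_free C))))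
    spe_map spe_nat.

Lemma sum_ses : @pe_ses R G phi A sumPE C (fun x u => (u, 0)) (fun x p => p.2).
Proof.
have [LA NA] := pe_nat A; have [LC NC] := pe_nat C; have [LT NT] := Ht.
split; [|split].
- split; [split|].
  + move=> x c u v; apply: injective_projections => //=.
    by rewrite scaler0 addr0.
  + move=> x y a m; apply: injective_projections => //=.
    by rewrite mact0.
  + move=> x m; apply: injective_projections; rewrite /= /spe_map /=.
      by rewrite (lin0 (LT x)) addr0.
    exact: (lin0 (LC x)).
- split; [split|].
  + by move=> x c u v.
  + by [].
  + by [].
- move=> x; split; [|split].
  + by move=> u v [].
  + by move=> c; exists (0, c).
  + move=> [u v] /=; split; first by move=> ->; exists u.
    by move=> [a [_ <-]].
Qed.

Lemma K0_sumPE b : K0eq [:: (b, sumPE)] [:: (b, A); (b, C)].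
Proof.
have H := K0_ses sum_ses.
case: b => //.
exact: (K0_neg H).
Qed.

End SumPE.

Lemma K0_zero (E : PE) b : (forall x (m : mob (pe_mod E) x), m = 0) ->
  K0eq [:: (b, E)] [::].
Proof.
move=> Z.
have Hs : @pe_ses R G phi E E E (fun x u => u) (fun x u => u).
  have Hid : pe_hom (fun x (u : mob (pe_mod E) x) => u) by [].
  split; [|split] => //.
  move=> x; split; [by []|split]; first by move=> c; exists c.
  move=> u; split; first by move=> ->; exists 0.
  by move=> _; apply: Z.
have H := K0_ses Hs.
have H1 : K0eq [:: (true, E)] [::].
  apply: (@K0_trans _ _ _ _ ([:: (true, E)] ++ [:: (true, E); (false, E)])).
    apply: K0_sym; apply: K0_nil_r; exact: K0_cancel.
  apply: (@K0_trans _ _ _ _ ([:: (true, E)] ++ [:: (false, E)])); last exact: K0_cancel.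
  have := K0_appr [:: (false, E)] (K0_sym H); exact.
case: b => //.
exact: (K0_neg H1).
Qed.

End Mods.

Set Implicit Arguments.
Unset Strict Implicit.
Unset Printing Implicit Defensive.

Section NCs.
Variables (R : comPzRingType) (G : EICategory) (phi : Endofunctor G).
Notation PE := (@PhiEnd R G phi).
Notation K0 := (@K0eq R G phi).

Local Unset Implicit Arguments.
Record NC := {
  nm : nat -> RGmod R G;
  nfree : forall n, fg_free (nm n);
  nd : forall n x, mob (nm n.+1) x -> mob (nm n) x;
  nd_nat : forall n, natural (nd n);
  ndd : forall n x m, nd n x (nd n.+1 x m) = 0;
  ne : forall n x, mob (nm n) x -> mob (nm n) (fob phi x);
  ne_nat : forall n, phi_natural (ne n);
  ne_d : forall n x m, ne n x (nd n x m) = nd n (fob phi x) (ne n.+1 x m);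
  ns : forall n x, mob (nm n) x -> mob (nm n.+1) x;
  ns_nat : forall n, natural (ns n);
  ns0 : forall x m, nd 0 x (ns 0 x m) = m;
  nsS : forall n x m, nd n.+1 x (ns n.+1 x m) + ns n x (nd n x m) = m;
  nlen : nat;
  nzero : forall n, (nlen < n)%N -> forall x (m : mob (nm n) x), m = 0
}.
Local Set Implicit Arguments.

Definition peN (E : NC) n : PE :=
  @Build_PhiEnd R G phi (nm E n) (nfree E n) (ne E n) (ne_nat E n).

Definition uNC (E : NC) := [seq (~~ odd n, peN E n) | n <- iota 0 (nlen E).+1].

Section Lins.
Variable E : NC.
Lemma ndD n x u v : nd E n x (u + v) = nd E n x u + nd E n x v.
Proof. exact: (linD ((nd_nat E n).1 x)). Qed.
Lemma nd0 n x : nd E n x 0 = 0.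
Proof. exact: (lin0 ((nd_nat E n).1 x)). Qed.
Lemma ndB n x u v : nd E n x (u - v) = nd E n x u - nd E n x v.
Proof. exact: (linB ((nd_nat E n).1 x)). Qed.
Lemma nsD n x u v : ns E n x (u + v) = ns E n x u + ns E n x v.
Proof. exact: (linD ((ns_nat E n).1 x)). Qed.
Lemma ns_0 n x : ns E n x 0 = 0.
Proof. exact: (lin0 ((ns_nat E n).1 x)). Qed.
Lemma nsB n x u v : ns E n x (u - v) = ns E n x u - ns E n x v.
Proof. exact: (linB ((ns_nat E n).1 x)). Qed.
Lemma neD n x u v : ne E n x (u + v) = ne E n x u + ne E n x v.
Proof. exact: (linD ((ne_nat E n).1 x)). Qed.
Lemma ne0 n x : ne E n x 0 = 0.
Proof. exact: (lin0 ((ne_nat E n).1 x)). Qed.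
Lemma neB n x u v : ne E n x (u - v) = ne E n x u - ne E n x v.
Proof. exact: (linB ((ne_nat E n).1 x)). Qed.
End Lins.

Section Shift.
Variable E : NC.
Hypothesis H2 : (2 <= nlen E)%N.

Definition tE x (v : mob (nm E 0) x) : mob (nm E 2) (fob phi x) :=
  ns E 1 (fob phi x) (ne E 1 x (ns E 0 x v) - ns E 0 (fob phi x) (ne E 0 x v)).

Lemma tE_nat : phi_nat2 (M := nm E 0) (N := nm E 2) tE.
Proof.
split.
  move=> x; apply: lin_intro.
    move=> u v; rewrite /tE -nsD; congr (ns E 1 _ _).
    by rewrite !nsD !neD !nsD opprD addrACA.
  move=> a u; rewrite /tE.
  rewrite (linZ ((ns_nat E 0).1 x)) (linZ ((ne_nat E 1).1 x)).
  rewrite (linZ ((ne_nat E 0).1 x)) (linZ ((ns_nat E 0).1 _)) -scalerBr.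
  by rewrite (linZ ((ns_nat E 1).1 _)).
move=> x y a m; rewrite /tE.
rewrite (ns_nat E 0).2 (ne_nat E 1).2 (ne_nat E 0).2 (ns_nat E 0).2.
by rewrite -mactN -mactD (ns_nat E 1).2.
Qed.

Lemma dtE x v : nd E 1 (fob phi x) (tE v) =
   ne E 1 x (ns E 0 x v) - ns E 0 (fob phi x) (ne E 0 x v).
Proof.
rewrite /tE; set w := (X in ns E 1 _ X).
have Hd0 : nd E 0 (fob phi x) w = 0.
  by rewrite /w ndB -ne_d !ns0 subrr.
by have := nsS E 0 (fob phi x) w; rewrite Hd0 ns_0 addr0.
Qed.

Local Unset Implicit Arguments.
Definition nm' n : RGmod R G :=
  match n with 0 => nm E 1 | 1 => smod (nm E 2) (nm E 0) | k.+2 => nm E k.+3 end.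

Definition nfree' n : fg_free (nm' n) :=
  match n with
  | 0 => nfree E 1
  | 1 => fgT_fg_free (fgT_sum (fg_free_fgT (nfree E 2)) (fg_free_fgT (nfree E 0)))
  | k.+2 => nfree E k.+3 end.

Definition nd' n x : mob (nm' n.+1) x -> mob (nm' n) x :=
  match n as n return mob (nm' n.+1) x -> mob (nm' n) x with
  | 0 => fun p => nd E 1 x p.1 + ns E 0 x p.2
  | 1 => fun z => (nd E 2 x z, 0)
  | k.+2 => nd E k.+3 x end.

Definition ne' n x : mob (nm' n) x -> mob (nm' n) (fob phi x) :=
  match n as n return mob (nm' n) x -> mob (nm' n) (fob phi x) with
  | 0 => ne E 1 x
  | 1 => @spe_map R G phi (peN E 2) (peN E 0) tE x
  | k.+2 => ne E k.+3 x end.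

Definition ne_nat' n : phi_natural (ne' n) :=
  match n as n return phi_natural (ne' n) with
  | 0 => ne_nat E 1
  | 1 => @spe_nat R G phi (peN E 2) (peN E 0) tE tE_nat
  | k.+2 => ne_nat E k.+3 end.

Definition ns' n x : mob (nm' n) x -> mob (nm' n.+1) x :=
  match n as n return mob (nm' n) x -> mob (nm' n.+1) x with
  | 0 => fun y => (ns E 1 x y, nd E 0 x y)
  | 1 => fun p => ns E 2 x p.1 - ns E 2 x (ns E 1 x (ns E 0 x p.2))
  | k.+2 => ns E k.+3 x end.

Lemma nd_nat' n : natural (nd' n).
Proof.
case: n => [|[|k]] /=; last exact: nd_nat.
- split.
    move=> x; apply: lin_intro.
      by move=> [u1 u2] [v1 v2] /=; rewrite ndD nsD addrACA.
    move=> a [u1 u2] /=.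
    by rewrite (linZ ((nd_nat E 1).1 x)) (linZ ((ns_nat E 0).1 x)) scalerDr.
  by move=> x y a [u v] /=; rewrite (nd_nat E 1).2 (ns_nat E 0).2 mactD.
- split.
    move=> x; apply: lin_intro.
      by move=> u v; apply: injective_projections; rewrite /= ?ndD ?addr0.
    move=> a u; apply: injective_projections => /=.
      exact: (linZ ((nd_nat E 2).1 x)).
    by rewrite scaler0.
  move=> x y a u; apply: injective_projections => /=.
    exact: (nd_nat E 2).2.
  by rewrite mact0.
Qed.

Lemma ndd' n x m : nd' n x (nd' n.+1 x m) = 0.
Proof.
case: n m => [|[|k]] m /=; last exact: ndd.
- by rewrite ndd ns_0 addr0.
- by apply: injective_projections => //=; rewrite ndd.
Qed.

Lemma ne_d' n x m : ne' n x (nd' n x m) = nd' n (fob phi x) (ne' n.+1 x m).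
Proof.
case: n m => [|[|k]] m /=; last exact: ne_d.
- case: m => [u v] /=; rewrite /spe_map /=.
  rewrite neD ne_d ndD dtE -!addrA; congr (_ + _).
  by rewrite addNr addr0.
- apply: injective_projections; rewrite /= /spe_map /=.
    by rewrite ne_d /tE (ns_0 E 0 x) (ne0 E 1 x) (ne0 E 0 x) (ns_0 E 0 (fob phi x)) subr0 (ns_0 E 1 (fob phi x)) addr0.
  exact: (ne0 E 0 x).
Qed.

Lemma ns_nat' n : natural (ns' n).
Proof.
case: n => [|[|k]] /=; last exact: ns_nat.
- split.
    move=> x; apply: lin_intro.
      by move=> u v; apply: injective_projections; rewrite /= ?nsD ?ndD.
    move=> a u; apply: injective_projections => /=.
      exact: (linZ ((ns_nat E 1).1 x)).
    exact: (linZ ((nd_nat E 0).1 x)).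
  move=> x y a u; apply: injective_projections => /=.
    exact: (ns_nat E 1).2.
  exact: (nd_nat E 0).2.
- split.
    move=> x; apply: lin_intro.
      move=> [u1 u2] [v1 v2] /=; rewrite !nsD !opprD.
      by rewrite addrACA.
    move=> a [u1 u2] /=.
    rewrite (linZ ((ns_nat E 0).1 x)) (linZ ((ns_nat E 1).1 x)) !(linZ ((ns_nat E 2).1 x)).
    by rewrite scalerBr.
  move=> x y a [u v] /=.
  by rewrite (ns_nat E 0).2 (ns_nat E 1).2 !(ns_nat E 2).2 mactD mactN.
Qed.

Lemma ns0' x m : nd' 0 x (ns' 0 x m) = m.
Proof. by rewrite /= nsS. Qed.

Lemma nsS' n x m : nd' n.+1 x (ns' n.+1 x m) + ns' n x (nd' n x m) = m.
Proof.
case: n m => [|[|k]] m /=; last exact: nsS.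
- case: m => [y v]; apply: injective_projections => /=.
    have Hw : nd E 2 x (ns E 2 x (ns E 1 x (ns E 0 x v))) = ns E 1 x (ns E 0 x v).
      have := nsS E 1 x (ns E 1 x (ns E 0 x v)).
      have -> : nd E 1 x (ns E 1 x (ns E 0 x v)) = 0.
        by have := nsS E 0 x (ns E 0 x v); rewrite ns0 => /(congr1 (fun z => z - ns E 0 x v)); rewrite addrK subrr.
      by rewrite ns_0 addr0.
    rewrite ndB Hw nsD [ns E 1 x (nd E 1 x y) + _]addrC addrA subrK. exact: nsS.

  by rewrite add0r ndD ndd add0r ns0.
- by rewrite (ns_0 E 0 x) (ns_0 E 1 x) (ns_0 E 2 x) subr0 nsS.
Qed.

Lemma nzero' n : ((nlen E).-1 < n)%N -> forall x (m : mob (nm' n) x), m = 0.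
Proof.
case: n => [|[|k]] //=.
- by move=> Hk; exfalso; move: Hk H2; case: (nlen E) => [|[|l]].
move=> Hk x m; apply: (nzero E k.+3).
by move: Hk H2; case: (nlen E) => [|l] //=; rewrite ltnS.
Qed.

Definition shiftNC : NC :=
  @Build_NC nm' nfree' nd' nd_nat' ndd' ne' ne_nat' ne_d' ns' ns_nat' ns0' nsS'
    (nlen E).-1 nzero'.

End Shift.

End NCs.
Arguments nm {R G phi}.
Arguments nfree {R G phi}.
Arguments nd {R G phi}.
Arguments nd_nat {R G phi}.
Arguments ndd {R G phi}.
Arguments ne {R G phi}.
Arguments ne_nat {R G phi}.
Arguments ne_d {R G phi}.
Arguments ns {R G phi}.
Arguments ns_nat {R G phi}.
Arguments ns0 {R G phi}.
Arguments nsS {R G phi}.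
Arguments nlen {R G phi}.
Arguments nzero {R G phi}.
Arguments shiftNC {R G phi E}.

Set Implicit Arguments.
Unset Strict Implicit.
Unset Printing Implicit Defensive.

Section Main.
Variables (R : comPzRingType) (G : EICategory) (phi : Endofunctor G).
Notation PE := (@PhiEnd R G phi).
Notation K0 := (@K0eq R G phi).
Notation NC := (@NC R G phi).

Lemma base0 (E : NC) : nlen E = 0%N -> K0 (uNC E) [::].
Proof.
move=> HE; rewrite /uNC HE /=.
apply: K0_zero => x m.
rewrite -(ns0 E x m) (nzero E 1 _ x (ns E 0 x m)) ?HE //.
exact: nd0.
Qed.

Lemma base1 (E : NC) : nlen E = 1%N -> K0 (uNC E) [::].
Proof.
move=> HE; rewrite /uNC HE /=.
have sd : forall x (w : mob (nm E 1) x), ns E 0 x (nd E 0 x w) = w.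
  move=> x w; have := nsS E 0 x w.
  by rewrite (nzero E 2 _ x (ns E 1 x w)) ?HE // nd0 add0r.
have Hiso : pe_iso (peN E 1) (peN E 0).
  exists (nd E 0), (ns E 0); split; [|split; [|split]].
  - split; first exact: nd_nat.
    by move=> x m /=; rewrite ne_d.
  - split; first exact: ns_nat.
    move=> x m /=.
    by rewrite -[in LHS](sd _ (ne E 1 x (ns E 0 x m))) -ne_d ns0.
  - exact: sd.
  - exact: ns0.
apply: K0_trans (K0_app (K0_sym (K0_iso Hiso)) (K0_refl [:: (false, peN E 1)])) _.
exact: K0_cancel.
Qed.

Lemma shift_map (E : NC) (H2 : (2 <= nlen E)%N) l m :
  [seq (~~ odd n, peN (shiftNC H2) n) | n <- iota m.+2 l] =
  negl [seq (~~ odd n, peN E n) | n <- iota m.+3 l].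
Proof.
elim: l m => [|l IH] m //=.
by rewrite (IH m.+1) !negbK.
Qed.

Lemma step (E : NC) (H2 : (2 <= nlen E)%N) :
  K0 (uNC (shiftNC H2)) [::] -> K0 (uNC E) [::].
Proof.
rewrite /uNC.
have [l El] : exists l, nlen E = l.+2 by move: H2; case: (nlen E) => [|[|l]] //; exists l.
have -> : nlen (shiftNC H2) = l.+1 by rewrite /= El.
rewrite El /=.
rewrite (shift_map H2 l 0).
set T := [seq (~~ odd n, peN E n) | n <- iota 3 l].
move=> H.
have H' : K0 ((true, peN E 1) :: (false, peN E 2) :: (false, peN E 0) :: negl T) [::].
  apply: K0_trans H; apply: K0_sym.
  have := K0_appl [:: (true, peN E 1)] (K0_appr (negl T) (@K0_sumPE R G phi (peN E 2) (peN E 0) _ (@tE_nat R G phi E) false)).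
  exact.
have := K0_nil_neg H'; rewrite /= neglK => H''.
apply: K0_trans _ H''; apply: K0_perm.
apply: Permutation_trans; first exact: perm_swap.
by apply: perm_skip; apply: perm_swap.
Qed.

Lemma NC_u0 N : forall E : NC, (nlen E <= N)%N -> K0 (uNC E) [::].
Proof.
elim: N => [|N IH] E HE.
  by apply: base0; move: HE; case: (nlen E).
case El: (nlen E) => [|[|l]].
- exact: base0.
- exact: base1.
have H2 : (2 <= nlen E)%N by rewrite El.
have Hs : K0 (uNC (shiftNC H2)) [::].
  by apply: IH; rewrite /= El; move: HE; rewrite El.
exact: (step Hs).
Qed.

End Main.

Unset Implicit Arguments.
Unset Strict Implicit.
Unset Printing Implicit Defensive.

Arguments cd_nat {R G}.
Arguments cdd {R G}.
Arguments cbound_spec {R G}.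

Lemma zHA (V : zmodType) (A Bv y P Q W : V) : W - y = A + Bv ->
  - A + (W + P) - (Bv + Q) = y + (P - Q).
Proof.
move=> E; have -> : W = y + (A + Bv) by rewrite -E addrC subrK.
by rewrite opprD addrA (addrCA y) -(addrA A) addKr (addrAC y Bv P) addrK addrA.
Qed.
Lemma zHB (V : zmodType) (K S1 S2 KH z : V) : KH - z = S1 + S2 ->
  - (K + S1) + (K + KH + - S2) = z + 0.
Proof.
move=> E; have -> : KH = z + (S1 + S2) by rewrite -E addrC subrK.
rewrite addr0 (addrCA K z) (addrA K S1 S2) (addrA z) addrK (addrC z) addKr //.
Qed.
Lemma zHC (V : zmodType) (X P Q : V) : - P - - Q = (X - P) - (X - Q).
Proof. by rewrite opprK opprB [RHS]addrC -[RHS]addrA addKr addrC. Qed.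


Section Cone.
Variables (R : comPzRingType) (G : EICategory) (phi : Endofunctor G).
Variables (C D : Complex R G).
Variables (f : phi_cmap_type phi C) (Hf : phi_chain_map f).
Variables (g : phi_cmap_type phi D) (Hg : phi_chain_map g).
Variables (h : cmap_type C D) (Hh : chain_map h).
Variables (k : cmap_type D C) (Hk : chain_map k).
Variable sg : homotopy_type C C.
Hypothesis Hsg_nat : forall n, natural (sg n).
Hypothesis Hsg : forall n x (m : mob (cmod C (n + 1)) x),
  k (n + 1) x (h (n + 1) x m) - m = cd C (n + 1) x (sg (n + 1) x m) + sg n x (cd C n x m).
Variable ta : homotopy_type D D.
Hypothesis Hta_nat : forall n, natural (ta n).
Hypothesis Hta : forall n x (m : mob (cmod D (n + 1)) x),
  h (n + 1) x (k (n + 1) x m) - m = cd D (n + 1) x (ta (n + 1) x m) + ta n x (cd D n x m).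
Hypothesis Hgh : forall n x (m : mob (cmod C n) x),
  g n x (h n x m) = h n (fob phi x) (f n x m).

Lemma hD i x u v : h i x (u + v) = h i x u + h i x v.
Proof. exact: (linD ((Hh.1 i).1 x)). Qed.
Lemma hN i x u : h i x (- u) = - h i x u.
Proof. exact: (linN ((Hh.1 i).1 x)). Qed.
Lemma hB i x u v : h i x (u - v) = h i x u - h i x v.
Proof. exact: (linB ((Hh.1 i).1 x)). Qed.
Lemma h0 i x : h i x 0 = 0.
Proof. exact: (lin0 ((Hh.1 i).1 x)). Qed.
Lemma hZ i x a u : h i x (a *: u) = a *: h i x u.
Proof. exact: (linZ ((Hh.1 i).1 x)). Qed.
Lemma kD i x u v : k i x (u + v) = k i x u + k i x v.
Proof. exact: (linD ((Hk.1 i).1 x)). Qed.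
Lemma kN i x u : k i x (- u) = - k i x u.
Proof. exact: (linN ((Hk.1 i).1 x)). Qed.
Lemma kB i x u v : k i x (u - v) = k i x u - k i x v.
Proof. exact: (linB ((Hk.1 i).1 x)). Qed.
Lemma k0 i x : k i x 0 = 0.
Proof. exact: (lin0 ((Hk.1 i).1 x)). Qed.
Lemma kZ i x a u : k i x (a *: u) = a *: k i x u.
Proof. exact: (linZ ((Hk.1 i).1 x)). Qed.
Lemma sgD i x u v : sg i x (u + v) = sg i x u + sg i x v.
Proof. exact: (linD ((Hsg_nat i).1 x)). Qed.
Lemma sgN i x u : sg i x (- u) = - sg i x u.
Proof. exact: (linN ((Hsg_nat i).1 x)). Qed.
Lemma sgB i x u v : sg i x (u - v) = sg i x u - sg i x v.
Proof. exact: (linB ((Hsg_nat i).1 x)). Qed.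
Lemma sg0 i x : sg i x 0 = 0.
Proof. exact: (lin0 ((Hsg_nat i).1 x)). Qed.
Lemma sgZ i x a u : sg i x (a *: u) = a *: sg i x u.
Proof. exact: (linZ ((Hsg_nat i).1 x)). Qed.
Lemma taD i x u v : ta i x (u + v) = ta i x u + ta i x v.
Proof. exact: (linD ((Hta_nat i).1 x)). Qed.
Lemma taN i x u : ta i x (- u) = - ta i x u.
Proof. exact: (linN ((Hta_nat i).1 x)). Qed.
Lemma taB i x u v : ta i x (u - v) = ta i x u - ta i x v.
Proof. exact: (linB ((Hta_nat i).1 x)). Qed.
Lemma ta0 i x : ta i x 0 = 0.
Proof. exact: (lin0 ((Hta_nat i).1 x)). Qed.
Lemma taZ i x a u : ta i x (a *: u) = a *: ta i x u.
Proof. exact: (linZ ((Hta_nat i).1 x)). Qed.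
Lemma dCD i x u v : cd C i x (u + v) = cd C i x u + cd C i x v.
Proof. exact: (linD ((cd_nat C i).1 x)). Qed.
Lemma dCN i x u : cd C i x (- u) = - cd C i x u.
Proof. exact: (linN ((cd_nat C i).1 x)). Qed.
Lemma dCB i x u v : cd C i x (u - v) = cd C i x u - cd C i x v.
Proof. exact: (linB ((cd_nat C i).1 x)). Qed.
Lemma dC0 i x : cd C i x 0 = 0.
Proof. exact: (lin0 ((cd_nat C i).1 x)). Qed.
Lemma dCZ i x a u : cd C i x (a *: u) = a *: cd C i x u.
Proof. exact: (linZ ((cd_nat C i).1 x)). Qed.
Lemma dDD i x u v : cd D i x (u + v) = cd D i x u + cd D i x v.
Proof. exact: (linD ((cd_nat D i).1 x)). Qed.
Lemma dDN i x u : cd D i x (- u) = - cd D i x u.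
Proof. exact: (linN ((cd_nat D i).1 x)). Qed.
Lemma dDB i x u v : cd D i x (u - v) = cd D i x u - cd D i x v.
Proof. exact: (linB ((cd_nat D i).1 x)). Qed.
Lemma dD0 i x : cd D i x 0 = 0.
Proof. exact: (lin0 ((cd_nat D i).1 x)). Qed.
Lemma dDZ i x a u : cd D i x (a *: u) = a *: cd D i x u.
Proof. exact: (linZ ((cd_nat D i).1 x)). Qed.
Lemma fD i x u v : f i x (u + v) = f i x u + f i x v.
Proof. exact: (linD (((Hf.1 i).1 x))). Qed.
Lemma fN i x u : f i x (- u) = - f i x u.
Proof. exact: (linN (((Hf.1 i).1 x))). Qed.
Lemma fB i x u v : f i x (u - v) = f i x u - f i x v.
Proof. exact: (linB (((Hf.1 i).1 x))). Qed.
Lemma f0 i x : f i x 0 = 0.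
Proof. exact: (lin0 (((Hf.1 i).1 x))). Qed.
Lemma fZ i x a u : f i x (a *: u) = a *: f i x u.
Proof. exact: (linZ (((Hf.1 i).1 x))). Qed.
Lemma gD i x u v : g i x (u + v) = g i x u + g i x v.
Proof. exact: (linD (((Hg.1 i).1 x))). Qed.
Lemma gN i x u : g i x (- u) = - g i x u.
Proof. exact: (linN (((Hg.1 i).1 x))). Qed.
Lemma gB i x u v : g i x (u - v) = g i x u - g i x v.
Proof. exact: (linB (((Hg.1 i).1 x))). Qed.
Lemma g0 i x : g i x 0 = 0.
Proof. exact: (lin0 (((Hg.1 i).1 x))). Qed.
Lemma gZ i x a u : g i x (a *: u) = a *: g i x u.
Proof. exact: (linZ (((Hg.1 i).1 x))). Qed.

Definition cm (i : int) : RGmod R G := smod (cmod D (i + 1)) (cmod C i).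
Definition cdE i x (p : mob (cm (i + 1)) x) : mob (cm i) x :=
  (cd D (i + 1) x p.1 + h (i + 1) x p.2, - cd C i x p.2).
Definition cS i x (p : mob (cm i) x) : mob (cm (i + 1)) x :=
  (- ta (i + 1) x p.1, k (i + 1) x p.1 + sg i x p.2).
Definition cN i x (p : mob (cm i) x) : mob (cm i) x :=
  (h (i + 1) x (sg i x p.2) - ta i x (h i x p.2), 0).
Definition cS' i x (p : mob (cm i) x) : mob (cm (i + 1)) x := cS i x (p - cN i x p).

Lemma natD' (M N : RGmod R G) (t : forall x, mob M x -> mob N x) (Ht : natural t) x u v :
  t x (u - v) = t x u - t x v.
Proof. exact: (linB (Ht.1 x)). Qed.
Arguments natD' {M N t}.

Lemma cdE_nat i : natural (cdE i).
Proof.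
split.
  move=> x; apply: lin_intro.
    move=> [u1 u2] [v1 v2]; apply: injective_projections; rewrite /cdE /=.
      by rewrite dDD hD addrACA.
    by rewrite dCD opprD.
  move=> a [u1 u2]; apply: injective_projections; rewrite /cdE /=.
    by rewrite dDZ hZ scalerDr.
  by rewrite dCZ scalerN.
move=> x y a [u1 u2]; apply: injective_projections; rewrite /cdE /=.
  by rewrite (cd_nat D _).2 (Hh.1 _).2 mactD.
by rewrite (cd_nat C _).2 mactN.
Qed.

Lemma cS_nat i : natural (cS i).
Proof.
split.
  move=> x; apply: lin_intro.
    move=> [u1 u2] [v1 v2]; apply: injective_projections; rewrite /cS /=.
      by rewrite taD opprD.
    by rewrite kD sgD addrACA.
  move=> a [u1 u2]; apply: injective_projections; rewrite /cS /=.
    by rewrite taZ scalerN.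
  by rewrite kZ sgZ scalerDr.
move=> x y a [u1 u2]; apply: injective_projections; rewrite /cS /=.
  by rewrite (Hta_nat _).2 mactN.
by rewrite (Hk.1 _).2 (Hsg_nat _).2 mactD.
Qed.

Lemma cN_nat i : natural (cN i).
Proof.
split.
  move=> x; apply: lin_intro.
    move=> [u1 u2] [v1 v2]; apply: injective_projections; rewrite /cN /=.
      by rewrite sgD hD hD taD opprD addrACA.
    by rewrite addr0.
  move=> a [u1 u2]; apply: injective_projections; rewrite /cN /=.
    by rewrite sgZ hZ hZ taZ scalerBr.
  by rewrite scaler0.
move=> x y a [u1 u2]; apply: injective_projections; rewrite /cN /=.
  by rewrite (Hsg_nat _).2 (Hh.1 _).2 (Hh.1 _).2 (Hta_nat _).2 mactB.
by rewrite mact0.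
Qed.

Lemma cS'_nat i : natural (cS' i).
Proof.
split.
  move=> x; apply: lin_intro.
    move=> u v; rewrite /cS' -(linD ((cS_nat i).1 x)); congr (cS i x _).
    by rewrite (linD ((cN_nat i).1 x)) opprD addrACA.
  move=> a u; rewrite /cS' -(linZ ((cS_nat i).1 x)); congr (cS i x _).
  by rewrite (linZ ((cN_nat i).1 x)) scalerBr.
move=> x y a u; rewrite /cS' (cN_nat i).2 -mactB (cS_nat i).2 //.
Qed.

Lemma HA i x (w : mob (cm (i + 1)) x) :
  cdE (i + 1) x (cS (i + 1) x w) + cS i x (cdE i x w) = w + cN (i + 1) x w.
Proof.
case: w => y z; apply: injective_projections; rewrite /cdE /cS /cN /=.
  rewrite dDN hD taD; apply: zHA; exact: Hta.
rewrite dCD kD sgN (Hk.2 (i + 1)); apply: zHB; exact: Hsg.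
Qed.

Lemma HB i x (w : mob (cm (i + 1)) x) :
  cN i x (cdE i x w) = cdE i x (cN (i + 1) x w).
Proof.
case: w => y z; apply: injective_projections; rewrite /cdE /cN /=; last by rewrite dC0 oppr0.
rewrite sgN hN hN taN h0 addr0 dDB -(Hh.2 (i + 1)).
have F2 : cd C (i + 1) x (sg (i + 1) x z) = (k (i + 1) x (h (i + 1) x z) - z) - sg i x (cd C i x z).
  by rewrite (Hsg i) addrK.
have F4 : cd D (i + 1) x (ta (i + 1) x (h (i + 1) x z)) =
   (h (i + 1) x (k (i + 1) x (h (i + 1) x z)) - h (i + 1) x z) - ta i x (cd D i x (h (i + 1) x z)).
  by rewrite (Hta i) addrK.
rewrite F2 F4 !hB (Hh.2 i).
exact: zHC.
Qed.

Lemma cNN i x (p : mob (cm i) x) : cN i x (cN i x p) = 0.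
Proof.
apply: injective_projections; rewrite /cN //=.
by rewrite sg0 h0 h0 ta0 subr0.
Qed.

Lemma contr i x (m : mob (cm (i + 1)) x) :
  cdE (i + 1) x (cS' (i + 1) x m) + cS' i x (cdE i x m) = m.
Proof.
rewrite /cS' HB -(natD' (cdE_nat i)) HA.
by rewrite (natD' (cN_nat _)) cNN subr0 subrK.
Qed.

Lemma cddE i x (m : mob (cm (i + 1 + 1)) x) : cdE i x (cdE (i + 1) x m) = 0.
Proof.
case: m => y z; apply: injective_projections; rewrite /cdE /=.
  by rewrite dDD cdd add0r hN (Hh.2 (i + 1)) subrr.
by rewrite dCN opprK cdd.
Qed.

Definition z0 i x (v : mob (cmod C i) x) : mob (cmod D (i + 1)) (fob phi x) := 0.
Lemma z0_nat i : @phi_nat2 R G phi (cmod C i) (cmod D (i + 1)) (z0 i).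
Proof.
split.
  by move=> x a u v; rewrite /z0 scaler0 addr0.
by move=> x y a m; rewrite /z0 mact0.
Qed.

Definition ceE i x (p : mob (cm i) x) : mob (cm i) (fob phi x) :=
  @spe_map R G phi (pe_of Hg (i + 1)) (pe_of Hf i) (z0 i) x p.

Lemma ceE_d i x (m : mob (cm (i + 1)) x) :
  ceE i x (cdE i x m) = cdE i (fob phi x) (ceE (i + 1) x m).
Proof.
case: m => y z; apply: injective_projections; rewrite /ceE /spe_map /cdE /z0 /=.
  by rewrite !addr0 gD (Hg.2 (i + 1)) Hgh.
by rewrite fN (Hf.2 i).
Qed.

Variable B : nat.
Hypothesis HB : (maxn (cbound C) (cbound D) < B)%N.

Definition bidx : int := - (B%:Z) - 1.
Definition idx (n : nat) : int := iter n.+1 (fun i => i + 1) bidx.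

Lemma idxE n : idx n = n%:Z - B%:Z.
Proof.
elim: n => [|n IH]; first by rewrite /idx /= /bidx subrK sub0r.
rewrite /idx iterS -/(idx n) IH.
by rewrite -addrAC -[n.+1]addn1 PoszD.
Qed.

Lemma cm_zero (i : int) :
  ((i + 1 < - (cbound D)%:Z) \/ ((cbound D)%:Z < i + 1)) ->
  ((i < - (cbound C)%:Z) \/ ((cbound C)%:Z < i)) ->
  forall x (m : mob (cm i) x), m = 0.
Proof.
move=> HD HC x [u v]; apply: injective_projections => /=.
  exact: (cbound_spec D _ HD x u).
exact: (cbound_spec C _ HC x v).
Qed.

Lemma ns0C x (m : mob (cm (idx 0)) x) :
  cdE (idx 0) x (cS' (idx 0) x m) = m.
Proof.
have := contr bidx x m.
rewrite (cm_zero bidx _ _ x (cdE bidx x m)).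
  by rewrite (lin0 ((cS'_nat bidx).1 x)) addr0.
  left; rewrite /bidx; move: HB; lia.
left; rewrite /bidx; move: HB; lia.
Qed.

Lemma nzeroC n : (2 * B < n)%N -> forall x (m : mob (cm (idx n)) x), m = 0.
Proof.
move=> Hn; apply: cm_zero; rewrite idxE; right; move: HB Hn; lia.
Qed.

Definition coneNC : NC R G phi :=
  @Build_NC R G phi (fun n => cm (idx n))
    (fun n => fgT_fg_free (fgT_sum (fg_free_fgT (cfree D (idx n + 1))) (fg_free_fgT (cfree C (idx n)))))
    (fun n => cdE (idx n)) (fun n => cdE_nat (idx n))
    (fun n => cddE (idx n))
    (fun n => ceE (idx n))
    (fun n => @spe_nat R G phi (pe_of Hg (idx n + 1)) (pe_of Hf (idx n)) (z0 (idx n)) (z0_nat (idx n)))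
    (fun n => ceE_d (idx n))
    (fun n => cS' (idx n)) (fun n => cS'_nat (idx n))
    ns0C (fun n => contr (idx n))
    (2 * B)%N nzeroC.

End Cone.

Unset Implicit Arguments.
Unset Strict Implicit.
Unset Printing Implicit Defensive.

Lemma odd_absz_sub (i c : nat) : odd (absz (i%:Z - c%:Z)) = odd i (+) odd c.
Proof.
case: (leqP c i) => H.
  have -> : i%:Z - c%:Z = (i - c)%N%:Z by rewrite subzn.
  by rewrite absz_nat oddB.
have -> : i%:Z - c%:Z = - (c - i)%N%:Z by rewrite -(subzn (ltnW H)) opprB.
by rewrite abszN absz_nat (oddB (ltnW H)) addbC.
Qed.

Lemma perm_mid' (T : Type) (x : T) (l2 l1 : seq T) :
  Permutation (x :: (l2 ++ l1)) (l2 ++ x :: l1).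
Proof.
elim: l2 => [|y l2 IH] /=; first exact: Permutation_refl.
apply: Permutation_trans (perm_swap _ _ _) _; exact: perm_skip.
Qed.

Lemma perm_catC' (T : Type) (l1 l2 : seq T) : Permutation (l1 ++ l2) (l2 ++ l1).
Proof.
elim: l1 => [|x l1 IH] /=; first by rewrite cats0; exact: Permutation_refl.
apply: Permutation_trans (perm_skip x IH) _; exact: perm_mid'.
Qed.

Section Fin.
Variables (R : comPzRingType) (G : EICategory) (phi : Endofunctor G).
Notation PE := (@PhiEnd R G phi).
Notation K0 := (@K0eq R G phi).

Lemma K0_zero_list (s : seq nat) (F : nat -> bool * PE) :
  (forall j, j \in s -> forall y (m : mob (pe_mod (F j).2) y), m = 0) ->
  K0 (map F s) [::].
Proof.
elim: s => [|j s IH] H /=; first exact: K0_refl.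
have -> : F j = ((F j).1, (F j).2) by case: (F j).
apply: (@K0_nil_cat R G phi [:: ((F j).1, (F j).2)] (map F s)).
  by apply: K0_zero; apply: H; rewrite inE eqxx.
by apply: IH => j' Hj'; apply: H; rewrite inE Hj' orbT.
Qed.

Lemma range_u (X : Complex R G) (fx : phi_cmap_type phi X) (Hfx : phi_chain_map fx)
  (a r : nat) :
  K0 [seq (~~ odd (absz (j%:Z - (cbound X + a)%N%:Z)), pe_of Hfx (j%:Z - (cbound X + a)%N%:Z))
       | j <- iota 0 (a + (2 * cbound X).+1 + r)] (u_of Hfx).
Proof.
set c := cbound X.
set F := fun j : nat => _.
rewrite iotaD iotaD map_cat map_cat.
have Z1 : K0 (map F (iota 0 a)) [::].
  apply: K0_zero_list => j; rewrite mem_iota /= => Hj y m.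
  apply: (cbound_spec X _ _ y m); left; move: Hj; lia.
have Z3 : K0 (map F (iota (0 + (a + (2 * c).+1)) r)) [::].
  apply: K0_zero_list => j; rewrite mem_iota /= => Hj y m.
  apply: (cbound_spec X _ _ y m); right; move: Hj; lia.
have E2 : map F (iota (0 + a) (2 * c).+1) = u_of Hfx.
  rewrite /u_of -map_comp add0n -[X in iota X _](addn0 a) iotaDl -map_comp.
  apply: eq_map => i /=.
  rewrite /F; have -> : (a + i)%N%:Z - (c + a)%N%:Z = i%:Z - c%:Z by lia.
  by [].
have := K0_app (K0_app Z1 (K0_refl (map F (iota (0 + a) (2 * c).+1)))) Z3.
rewrite -E2 => H; apply: K0_trans H _; rewrite cats0; exact: K0_refl.
Qed.

End Fin.

Theorem lemma1p7 (R : comPzRingType) (G : EICategory) (phi : Endofunctor G)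
  (C D : Complex R G)
  (f : phi_cmap_type phi C) (Hf : phi_chain_map f)
  (g : phi_cmap_type phi D) (Hg : phi_chain_map g)
  (h : cmap_type C D) (Hh : chain_hequiv h)
  (Hgh : forall n x (m : mob (cmod C n) x),
           g n x (h n x m) = h n (fob phi x) (f n x m)) :
  K0eq (u_of Hf) (u_of Hg).
Proof.
case: Hh => Hhm [k [Hkm [[sg [Hsgn Hsg]] [ta [Htan Hta]]]]].
have [B eB] : {B : nat | B = (2 * (maxn (cbound C) (cbound D)).+1)%N} by exists (2 * (maxn (cbound C) (cbound D)).+1)%N.
have HB : (maxn (cbound C) (cbound D) < B)%N by rewrite eB; lia.
pose E := coneNC R G phi C D f Hf g Hg h Hhm k Hkm sg Hsgn Hsg ta Htan Hta Hgh B HB.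
have H0 := NC_u0 (leqnn (nlen E)).
pose s := iota 0 (2 * B).+1.
change (K0eq (map (fun n => (~~ odd n, peN E n)) s) [::]) in H0.
pose Dp := fun n : nat => (~~ odd n, pe_of Hg (idx B n + 1)).
pose Cp := fun n : nat => (~~ odd n, pe_of Hf (idx B n)).
have H1 : K0eq (map Dp s ++ map Cp s) [::].
  apply: K0_trans H0; apply: K0_sym.
  apply: (K0_trans (l2 := flatten [seq [:: Dp n; Cp n] | n <- s])); last first.
    apply: K0_perm; exact: flatten_pair.
  rewrite -flatten_map1; apply: K0_flatten => n.
  exact: (@K0_sumPE R G phi (pe_of Hg (idx B n + 1)) (pe_of Hf (idx B n)) _ (z0_nat R G phi C D (idx B n)) (~~ odd n)).
have HC : K0eq (map Cp s) (u_of Hf).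
  pose a := (B - cbound C)%N.
  have -> : s = iota 0 (a + (2 * cbound C).+1 + a) by rewrite /s /a; congr iota; lia.
  have eBa : (cbound C + a)%N = B by rewrite /a; lia.
  have -> : map Cp (iota 0 (a + (2 * cbound C).+1 + a)) =
     [seq (~~ odd (absz (j%:Z - (cbound C + a)%N%:Z)), pe_of Hf (j%:Z - (cbound C + a)%N%:Z))
       | j <- iota 0 (a + (2 * cbound C).+1 + a)].
    apply: eq_map => j; rewrite /Cp idxE eBa odd_absz_sub.
    by rewrite eB oddM /= addbF.
  exact: range_u.
have HD : K0eq (map Dp s) (negl (u_of Hg)).
  pose a := (B - 1 - cbound D)%N.
  pose r := (B + 1 - cbound D)%N.
  have -> : s = iota 0 (a + (2 * cbound D).+1 + r) by rewrite /s /a /r; congr iota; lia.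
  have eBa : (cbound D + a)%N = (B - 1)%N by rewrite /a; lia.
  have -> : map Dp (iota 0 (a + (2 * cbound D).+1 + r)) =
     negl [seq (~~ odd (absz (j%:Z - (cbound D + a)%N%:Z)), pe_of Hg (j%:Z - (cbound D + a)%N%:Z))
       | j <- iota 0 (a + (2 * cbound D).+1 + r)].
    rewrite /negl -map_comp; apply: eq_map => j; rewrite /Dp idxE eBa /=.
    have -> : j%:Z - B%:Z + 1 = j%:Z - (B - 1)%N%:Z by lia.
    have -> : (B - 1)%N = (2 * (maxn (cbound C) (cbound D))).+1 by rewrite eB; lia.
    by rewrite (odd_absz_sub j) /= oddM /= addbT negbK.
  apply: K0_neg; exact: range_u.
have H2 : K0eq (negl (u_of Hg) ++ u_of Hf) [::] := K0_trans (K0_sym (K0_app HD HC)) H1.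
apply: K0_diff. apply: (K0_trans _ H2). apply: K0_perm. exact: perm_catC'.
Qed.
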